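(* Let $R$ be a commutative ring and $(A,d)$ a differential graded $R$-algebra such that every dg-simple left dg-module over $(A,d)$ is acyclic. Then every left dg-module over $(A,d)$ of finite dg-composition length is acyclic. In particular, if $(A,d)$, as a left dg-module over itself, has finite dg-composition length, then $(A,d)$ is acyclic.
   Context: A differential graded (dg) $R$-algebra $(A,d)$ is a $\mathbb{Z}$-graded $R$-algebra $A$ with an $R$-linear degree-$1$ endomorphism $d$, $d^2=0$, $d(ab)=d(a)b+(-1)^{|a|}a\,d(b)$ for homogeneous $a,b$. A left dg-module $(M,\delta)$ is a graded left $A$-module with a degree-$1$ map $\delta$, $\delta^2=0$, $\delta(am)=d(a)m+(-1)^{|a|}a\,\delta(m)$; dg-submodules are graded submodules stable under $\delta$; $(S,\delta)$ is dg-simple if $S\neq0$ and its only dg-submodules are $0,S$. A dg-module has finite dg-composition length $n$ if it has a chain of dg-submodules $0=M_0\subset M_1\subset\dots\subset M_n=M$ with each $M_i/M_{i-1}$ dg-simple. Acyclic means the homology $\ker\delta/\operatorname{im}\delta$ vanishes. *)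

(* Defs.v *)
From HB Require Import structures.
From mathcomp Require Import all_boot all_order all_algebra.
Set Implicit Arguments. Unset Strict Implicit. Unset Printing Implicit Defensive.
Import Order.TTheory GRing.Theory Num.Theory.
Local Open Scope ring_scope.

(* An R-algebra (R commutative, possibly the zero ring) is a ring A with a
   ring morphism phi : R -> A whose image is central; r * a := phi r * a.
   A left A-module is an lmodType A (scaling a *: m), with R acting through phi.
   A Z-grading of an additive group V is a family G : int -> pred V of
   subgroups (closed under the R-action) such that V is their internal direct sum. *)

Section DG.
Variables (R : comPzRingType) (A : pzRingType) (phi : {rmorphism R -> A}).

Definition R_algebra : Prop := forall (r : R) (a : A), phi r * a = a * phi r.

Definition direct_sum_decomp (V : zmodType) (G : int -> pred V) : Prop :=
  (forall v : V, exists (s : seq int) (f : int -> V),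
      [/\ uniq s, (forall i, f i \in G i) & v = \sum_(i <- s) f i]) /\
  (forall (s : seq int) (f : int -> V), uniq s -> (forall i, f i \in G i) ->
      \sum_(i <- s) f i = 0 -> forall i, i \in s -> f i = 0).

Definition additive_subgroup (V : zmodType) (P : pred V) : Prop :=
  0 \in P /\ (forall x y, x \in P -> y \in P -> x - y \in P).

Definition dg_algebra (GA : int -> pred A) (d : A -> A) : Prop :=
  R_algebra /\
      (forall n, additive_subgroup (GA n)) /\
      (forall n (r : R) a, a \in GA n -> phi r * a \in GA n) /\
      direct_sum_decomp GA /\
      1 \in GA 0 /\
      (forall m n a b, a \in GA m -> b \in GA n -> a * b \in GA (m + n)) /\
      (forall (r : R) a b, d (phi r * a + b) = phi r * d a + d b) /\
      (forall n a, a \in GA n -> d a \in GA (n + 1)) /\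
      (forall a, d (d a) = 0) /\
      (forall m n a b, a \in GA m -> b \in GA n ->
          d (a * b) = d a * b + (-1) ^+ `|m|%N * a * d b).

Definition dg_module (GA : int -> pred A) (d : A -> A)
    (M : lmodType A) (GM : int -> pred M) (delta : M -> M) : Prop :=
  (forall n, additive_subgroup (GM n)) /\
  (forall n (r : R) x, x \in GM n -> phi r *: x \in GM n) /\
  direct_sum_decomp GM /\
  (forall m n a x, a \in GA m -> x \in GM n -> a *: x \in GM (m + n)) /\
  (forall (r : R) x y, delta (phi r *: x + y) = phi r *: delta x + delta y) /\
  (forall n x, x \in GM n -> delta x \in GM (n + 1)) /\
  (forall x, delta (delta x) = 0) /\
  (forall m n a x, a \in GA n -> x \in GM m ->
      delta (a *: x) = d a *: x + ((-1) ^+ `|n|%N * a) *: delta x).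

Definition dg_submodule (M : lmodType A) (GM : int -> pred M) (delta : M -> M)
    (N : pred M) : Prop :=
  [/\ additive_subgroup N,
      (forall a x, x \in N -> a *: x \in N),
      (forall x, x \in N -> exists (s : seq int) (f : int -> M),
          [/\ (forall i, f i \in GM i), (forall i, f i \in N) & x = \sum_(i <- s) f i]) &
      (forall x, x \in N -> delta x \in N)].

Definition dg_simple (M : lmodType A) (GM : int -> pred M) (delta : M -> M) : Prop :=
  (exists x : M, x != 0) /\
  (forall N : pred M, dg_submodule GM delta N ->
      (forall x, x \in N -> x = 0) \/ (forall x, x \in N)).

Definition acyclic (M : zmodType) (delta : M -> M) : Prop :=
  forall x, delta x = 0 -> exists y, x = delta y.

(* For dg-submodules N ⊆ N' of M, the quotient N'/N is dg-simple.
   By the correspondence theorem (dg-submodules of N'/N = dg-submodules L of M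
   with N ⊆ L ⊆ N') this means: N'/N <> 0 and there is nothing strictly between. *)
Definition dg_simple_subquotient (M : lmodType A) (GM : int -> pred M)
    (delta : M -> M) (N N' : pred M) : Prop :=
  (exists x, x \in N' /\ x \notin N) /\
  (forall L : pred M, dg_submodule GM delta L ->
      (forall x, x \in N -> x \in L) -> (forall x, x \in L -> x \in N') ->
      (forall x, x \in L -> x \in N) \/ (forall x, x \in N' -> x \in L)).

Definition dg_comp_length (M : lmodType A) (GM : int -> pred M) (delta : M -> M)
    (n : nat) : Prop :=
  exists Ms : nat -> pred M,
    [/\ (forall i, (i <= n)%N -> dg_submodule GM delta (Ms i)),
        (forall x, x \in Ms 0%N -> x = 0),
        (forall x, x \in Ms n),
        (forall i, (0 < i <= n)%N -> forall x, x \in Ms i.-1 -> x \in Ms i) &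
        (forall i, (0 < i <= n)%N -> dg_simple_subquotient GM delta (Ms i.-1) (Ms i))].

End DG.

(* Main.v *)
Require Import Defs.
From HB Require Import structures.
From mathcomp Require Import all_boot all_order all_algebra.
From Stdlib Require Import ClassicalEpsilon.
Import GRing.Theory.
Local Open Scope ring_scope.
Set Implicit Arguments. Unset Strict Implicit. Unset Printing Implicit Defensive.

Section Gen.
Variable V : zmodType.
Implicit Types (P : pred V).

Lemma sg0 P : additive_subgroup P -> 0 \in P.
Proof. by case. Qed.
Lemma sgB P x y : additive_subgroup P -> x \in P -> y \in P -> x - y \in P.
Proof. by case=> _ H; apply: H. Qed.
Lemma sgN P x : additive_subgroup P -> x \in P -> - x \in P.
Proof. by move=> H hx; rewrite -sub0r; apply: sgB => //; apply: sg0. Qed.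
Lemma sgD P x y : additive_subgroup P -> x \in P -> y \in P -> x + y \in P.
Proof. by move=> H hx hy; rewrite -[y]opprK; apply: sgB => //; apply: sgN. Qed.
Lemma sgMn P x n : additive_subgroup P -> x \in P -> x *+ n \in P.
Proof. move=> H hx; elim: n => [|n IH]; first by rewrite mulr0n sg0. by rewrite mulrS sgD. Qed.
Lemma sg_sum P (s : seq int) f : additive_subgroup P -> (forall i, f i \in P) -> \sum_(i <- s) f i \in P.
Proof. move=> H hf; elim: s => [|a s IH]; first by rewrite big_nil sg0. by rewrite big_cons sgD. Qed.

Lemma iterop_add (x : V) n : iterop n +%R x 0 = x *+ n.
Proof. case: n => // n; elim: n => // n /= ->. Qed.

Lemma collapse (G : int -> pred V) (s : seq int) (f : int -> V) :
  (forall i, additive_subgroup (G i)) -> (forall i, f i \in G i) ->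
  exists f' : int -> V, (forall i, f' i \in G i) /\ \sum_(i <- s) f i = \sum_(i <- undup s) f' i.
Proof.
move=> HG hf; exists (fun i => f i *+ count_mem i s); split.
  by move=> i; apply: sgMn.
rewrite -(big_undup_iterop_count _ s predT f); apply: eq_bigr => i _.
by rewrite iterop_add.
Qed.

Lemma sum_sub (s u : seq int) (F : int -> V) : uniq s -> uniq u -> {subset s <= u} ->
  \sum_(i <- u) (if i \in s then F i else 0) = \sum_(i <- s) F i.
Proof.
move=> us uu su; rewrite -big_mkcond -big_filter; apply: perm_big.
apply: uniq_perm; first exact: filter_uniq.
  done.
move=> i; rewrite mem_filter; case: (boolP (i \in s)) => //= /su ->.
by [].
Qed.

Lemma uniqueness (G : int -> pred V) (s t : seq int) (f h : int -> V) :
  (forall i, additive_subgroup (G i)) -> direct_sum_decomp G ->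
  uniq s -> uniq t -> (forall i, f i \in G i) -> (forall i, h i \in G i) ->
  \sum_(i <- s) f i = \sum_(i <- t) h i ->
  forall i, i \in s -> f i = if i \in t then h i else 0.
Proof.
move=> HG [_ HU] us ut hf hh hs i iS.
pose u := undup (s ++ t).
pose k j := (if j \in s then f j else 0) - (if j \in t then h j else 0).
have hk : forall j, k j \in G j.
  move=> j; rewrite /k; apply: sgB => //; case: ifP => _ //; exact: sg0.
have uu : uniq u by apply: undup_uniq.
have sk : \sum_(j <- u) k j = 0.
  rewrite sumrB !sum_sub //; first by rewrite hs subrr.
    by move=> j jt; rewrite mem_undup mem_cat jt orbT.
  by move=> j js; rewrite mem_undup mem_cat js.
have := HU u k uu hk sk i; rewrite mem_undup mem_cat iS /= /k iS.
by move=> /(_ isT) /eqP; rewrite subr_eq0 => /eqP.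
Qed.

End Gen.
Lemma sgI (V : zmodType) (P P' : pred V) : additive_subgroup P -> additive_subgroup P' ->
  additive_subgroup [pred x | (x \in P) && (x \in P')].
Proof.
move=> H1 H2; split; first by rewrite inE !sg0.
by move=> x y; rewrite !inE => /andP[? ?] /andP[? ?]; rewrite !sgB.
Qed.

Import GRing.Theory.
Local Open Scope ring_scope.
Set Implicit Arguments. Unset Strict Implicit. Unset Printing Implicit Defensive.

Section Quot.
Variables (A : pzRingType) (M : lmodType A) (N N' : pred M) (delta : M -> M).
Hypotheses (HN : additive_subgroup N) (HN' : additive_subgroup N').
Hypotheses (HNs : forall a x, x \in N -> a *: x \in N) (HN's : forall a x, x \in N' -> a *: x \in N').
Hypotheses (HNd : forall x, x \in N -> delta x \in N) (HN'd : forall x, x \in N' -> delta x \in N').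
Hypothesis HNN' : forall x, x \in N -> x \in N'.
Hypothesis Hdadd : forall x y, delta (x + y) = delta x + delta y.

Definition eqm (x y : M) := x - y \in N.

Lemma eqm_refl x : eqm x x. Proof. by rewrite /eqm subrr sg0. Qed.
Lemma eqm_sym x y : eqm x y -> eqm y x. Proof. by rewrite /eqm => h; rewrite -opprB sgN. Qed.
Lemma eqm_trans x y z : eqm x y -> eqm y z -> eqm x z.
Proof. by rewrite /eqm => h1 h2; rewrite -(subrKA y) sgD. Qed.
Lemma eqm_add x y x' y' : eqm x x' -> eqm y y' -> eqm (x + y) (x' + y').
Proof. by rewrite /eqm => h1 h2; rewrite opprD addrACA sgD. Qed.
Lemma eqm_opp x x' : eqm x x' -> eqm (- x) (- x').
Proof. by rewrite /eqm => h; rewrite -opprD sgN. Qed.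
Lemma eqm_scale a x x' : eqm x x' -> eqm (a *: x) (a *: x').
Proof. by rewrite /eqm => h; rewrite -scalerBr HNs. Qed.
Lemma delta0 : delta 0 = 0.
Proof. by have := Hdadd 0 0; rewrite addr0 => /(congr1 (fun z => z - delta 0)); rewrite subrr addrK. Qed.
Lemma deltaN x : delta (- x) = - delta x.
Proof. by apply/eqP; rewrite -subr_eq0 opprK -Hdadd addNr delta0. Qed.
Lemma deltaB x y : delta (x - y) = delta x - delta y.
Proof. by rewrite Hdadd deltaN. Qed.
Lemma eqm_delta x x' : eqm x x' -> eqm (delta x) (delta x').
Proof. by rewrite /eqm => h; rewrite -deltaB HNd. Qed.
Lemma eqm_N' x y : eqm x y -> y \in N' -> x \in N'.
Proof. by rewrite /eqm => h hy; rewrite -(subrK y x) sgD // HNN'. Qed.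

Lemma ex_rep x : exists y, (fun y => x - y \in N) y.
Proof. by exists x; rewrite subrr sg0. Qed.
Definition canon x : M := xchoose (ex_rep x).
Lemma canonP x : eqm x (canon x). Proof. exact: (xchooseP (ex_rep x)). Qed.
Lemma canonE x y : eqm x y -> canon x = canon y.
Proof.
move=> h; apply: eq_xchoose => z /=.
apply/idP/idP => hz.
  by have := eqm_trans (eqm_sym h) hz.
by have := eqm_trans h hz.
Qed.
Lemma canonK x : canon (canon x) = canon x.
Proof. by apply: canonE; apply: eqm_sym; apply: canonP. Qed.

Definition Qp (x : M) := (x \in N') && (canon x == x).
Definition Q := {x : M | Qp x}.
HB.instance Definition _ := Choice.on Q.

Lemma Qp0 : Qp (canon 0).
Proof. by rewrite /Qp canonK eqxx andbT; apply: eqm_N' (eqm_sym (canonP 0)) (sg0 HN'). Qed.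
Definition q0 : Q := exist _ (canon 0) Qp0.
Definition pi (x : M) : Q := insubd q0 (canon x).

Lemma valN' (q : Q) : val q \in N'. Proof. by move: (valP q) => /andP[]. Qed.
Lemma valC (q : Q) : canon (val q) = val q. Proof. by move: (valP q) => /andP[_ /eqP]. Qed.
Lemma val_pi x : x \in N' -> val (pi x) = canon x.
Proof.
move=> hx; rewrite /pi insubdK // unfold_in /Qp canonK eqxx andbT.
exact: eqm_N' (eqm_sym (canonP x)) hx.
Qed.
Lemma eqm_pi x : x \in N' -> eqm (val (pi x)) x.
Proof. by move=> hx; rewrite val_pi //; apply: eqm_sym; apply: canonP. Qed.
Lemma Qeq (q1 q2 : Q) : eqm (val q1) (val q2) -> q1 = q2.
Proof. by move=> h; apply: val_inj; rewrite -valC -[val q2]valC; apply: canonE. Qed.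
Lemma piE x y : x \in N' -> y \in N' -> eqm x y -> pi x = pi y.
Proof. by move=> hx hy h; apply: Qeq; rewrite !val_pi // (canonE h); apply: eqm_refl. Qed.

Lemma eqm_rw X X' Y Y' : eqm X X' -> eqm Y Y' -> X' = Y' -> eqm X Y.
Proof. by move=> h1 h2 e; subst; apply: eqm_trans h1 (eqm_sym h2). Qed.

Definition zeroq : Q := pi 0.
Definition addq (q1 q2 : Q) : Q := pi (val q1 + val q2).
Definition oppq (q : Q) : Q := pi (- val q).
Definition scaleq (a : A) (q : Q) : Q := pi (a *: val q).
Definition dQ (q : Q) : Q := pi (delta (val q)).

Lemma vzero : eqm (val zeroq) 0. Proof. exact: eqm_pi (sg0 HN'). Qed.
Lemma vadd q1 q2 : eqm (val (addq q1 q2)) (val q1 + val q2).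
Proof. by apply: eqm_pi; apply: sgD => //; apply: valN'. Qed.
Lemma vopp q : eqm (val (oppq q)) (- val q).
Proof. by apply: eqm_pi; apply: sgN => //; apply: valN'. Qed.
Lemma vscale a q : eqm (val (scaleq a q)) (a *: val q).
Proof. by apply: eqm_pi; apply: HN's; apply: valN'. Qed.
Lemma vdQ q : eqm (val (dQ q)) (delta (val q)).
Proof. by apply: eqm_pi; apply: HN'd; apply: valN'. Qed.

Lemma addqA : associative addq.
Proof.
move=> a b c; apply: Qeq.
apply: (eqm_rw (eqm_trans (vadd _ _) (eqm_add (eqm_refl _) (vadd _ _)))
               (eqm_trans (vadd _ _) (eqm_add (vadd _ _) (eqm_refl _)))).
by rewrite addrA.
Qed.
Lemma addqC : commutative addq.
Proof. by move=> a b; apply: Qeq; apply: (eqm_rw (vadd _ _) (vadd _ _)); rewrite addrC. Qed.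
Lemma add0q : left_id zeroq addq.
Proof.
move=> a; apply: Qeq; apply: (eqm_rw (eqm_trans (vadd _ _) (eqm_add vzero (eqm_refl _))) (eqm_refl _)).
by rewrite add0r.
Qed.
Lemma addNq : left_inverse zeroq oppq addq.
Proof.
move=> a; apply: Qeq; apply: (eqm_rw (eqm_trans (vadd _ _) (eqm_add (vopp _) (eqm_refl _))) vzero).
by rewrite addNr.
Qed.

HB.instance Definition _ := GRing.isZmodule.Build Q addqA addqC add0q addNq.

Lemma scaleqA a b (v : Q) : scaleq a (scaleq b v) = scaleq (a * b) v.
Proof.
apply: Qeq; apply: (eqm_rw (eqm_trans (vscale _ _) (eqm_scale _ (vscale _ _))) (vscale _ _)).
by rewrite scalerA.
Qed.
Lemma scaleq1 : left_id 1 scaleq.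
Proof. by move=> v; apply: Qeq; apply: (eqm_rw (vscale _ _) (eqm_refl _)); rewrite scale1r. Qed.
Lemma scaleqDr : right_distributive scaleq +%R.
Proof.
move=> a u v; apply: Qeq.
apply: (eqm_rw (eqm_trans (vscale _ _) (eqm_scale _ (vadd _ _)))
               (eqm_trans (vadd _ _) (eqm_add (vscale _ _) (vscale _ _)))).
by rewrite scalerDr.
Qed.
Lemma scaleqDl v : {morph scaleq^~ v : a b / a + b >-> a + b}.
Proof.
move=> a b; apply: Qeq.
apply: (eqm_rw (vscale _ _) (eqm_trans (vadd _ _) (eqm_add (vscale _ _) (vscale _ _)))).
by rewrite scalerDl.
Qed.

HB.instance Definition _ := GRing.Zmodule_isLmodule.Build A Q scaleqA scaleq1 scaleqDr scaleqDl.

Lemma vaddQ (q1 q2 : Q) : eqm (val (q1 + q2)) (val q1 + val q2). Proof. exact: vadd. Qed.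
Lemma voppQ (q : Q) : eqm (val (- q)) (- val q). Proof. exact: vopp. Qed.
Lemma vzeroQ : eqm (val (0 : Q)) 0. Proof. exact: vzero. Qed.
Lemma vscaleQ a (q : Q) : eqm (val (a *: q)) (a *: val q). Proof. exact: vscale. Qed.


Lemma pi_val (q : Q) : pi (val q) = q.
Proof. by apply: Qeq; apply: eqm_pi; apply: valN'. Qed.
Lemma pi0 : pi 0 = 0. Proof. by []. Qed.
Lemma piD x y : x \in N' -> y \in N' -> pi (x + y) = pi x + pi y.
Proof.
move=> hx hy; apply: Qeq.
apply: (eqm_rw (eqm_pi (sgD HN' hx hy)) (eqm_trans (vaddQ _ _) (eqm_add (eqm_pi hx) (eqm_pi hy)))).
by [].
Qed.
Lemma piN x : x \in N' -> pi (- x) = - pi x.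
Proof.
move=> hx; apply: Qeq.
by apply: (eqm_rw (eqm_pi (sgN HN' hx)) (eqm_trans (voppQ _) (eqm_opp (eqm_pi hx)))).
Qed.
Lemma piB x y : x \in N' -> y \in N' -> pi (x - y) = pi x - pi y.
Proof. by move=> hx hy; rewrite piD ?piN // sgN. Qed.
Lemma piZ a x : x \in N' -> pi (a *: x) = a *: pi x.
Proof.
move=> hx; apply: Qeq.
by apply: (eqm_rw (eqm_pi (HN's a hx)) (eqm_trans (vscaleQ _ _) (eqm_scale _ (eqm_pi hx)))).
Qed.
Lemma pid x : x \in N' -> pi (delta x) = dQ (pi x).
Proof.
move=> hx; apply: Qeq.
by apply: (eqm_rw (eqm_pi (HN'd hx)) (eqm_trans (vdQ _) (eqm_delta (eqm_pi hx)))).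
Qed.
Lemma pi_sum (s : seq int) (f : int -> M) : (forall i, f i \in N') ->
  pi (\sum_(i <- s) f i) = \sum_(i <- s) pi (f i).
Proof.
move=> hf; elim: s => [|a s IH]; first by rewrite !big_nil.
by rewrite !big_cons piD ?IH //; apply: sg_sum.
Qed.
Lemma pi_eq0 x : x \in N' -> pi x = 0 -> x \in N.
Proof.
move=> hx h; have := eqm_trans (eqm_sym (eqm_pi hx)) (eqm_trans (eqm_refl (val (pi x))) _).
rewrite h => /(_ _ vzeroQ); by rewrite /eqm subr0.
Qed.
Lemma pi_N x : x \in N -> pi x = 0.
Proof. by move=> hx; rewrite -pi0; apply: piE => //; [apply: HNN' | apply: sg0 | rewrite /eqm subr0]. Qed.

Definition asb (P : Prop) : bool := if excluded_middle_informative P then true else false.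
Lemma asbP (P : Prop) : asb P <-> P.
Proof. by rewrite /asb; case: excluded_middle_informative. Qed.

Section Grad.
Variable GM : int -> pred M.
Definition GQ (n : int) : pred Q := fun q => asb (exists x, x \in GM n /\ eqm x (val q)).
Lemma GQP n q : q \in GQ n <-> exists x, x \in GM n /\ eqm x (val q).
Proof. by rewrite unfold_in /GQ asbP. Qed.
Lemma pi_GQ n x : x \in GM n -> x \in N' -> pi x \in GQ n.
Proof. by move=> h1 h2; apply/GQP; exists x; split => //; apply: eqm_sym; apply: eqm_pi. Qed.
End Grad.

Lemma Q_dg_module (R : comPzRingType) (phi : {rmorphism R -> A}) GA d GM :
  dg_module phi GA d GM delta -> dg_submodule GM delta N -> dg_submodule GM delta N' ->
  dg_module phi GA d (GQ GM) dQ.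
Proof.
move=> [HGM [Hphi [[Hex Huni] [HGA [Hlin [Hdeg [Hdd Hleib]]]]]]].
move=> [_ _ HNgr _] [_ _ HN'gr _].
have HGN' : forall i, additive_subgroup [pred x | (x \in GM i) && (x \in N')].
  by move=> i; apply: sgI.
have HGN : forall i, additive_subgroup [pred x | (x \in GM i) && (x \in N)].
  by move=> i; apply: sgI.
split.
  move=> n; split.
    by apply/GQP; exists 0; split; [apply: sg0 | apply: eqm_sym; apply: vzeroQ].
  move=> q1 q2 /GQP[x1 [h1 e1]] /GQP[x2 [h2 e2]]; apply/GQP; exists (x1 - x2); split; first by apply: sgB.
  apply: eqm_sym; apply: (eqm_rw (eqm_trans (vaddQ _ _) (eqm_add (eqm_refl _) (voppQ _))) (eqm_add e1 (eqm_opp e2))).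
  by [].
split.
  move=> n r q /GQP[x [h e]]; apply/GQP; exists (phi r *: x); split; first by apply: Hphi.
  by apply: eqm_sym; apply: eqm_trans (vscaleQ _ _) (eqm_scale _ (eqm_sym e)).
split.
  split.
    move=> q; case: (HN'gr _ (valN' q)) => s [f [hfG hfN' hq]].
    have [f' [hf' hs]] := collapse (G := fun i => [pred x | (x \in GM i) && (x \in N')]) s HGN'
       (fun i => introT andP (conj (hfG i) (hfN' i))).
    exists (undup s), (fun i => pi (f' i)); split; first exact: undup_uniq.
      by move=> i; have /andP[? ?] := hf' i; apply: pi_GQ.
    have hN'f : forall i, f' i \in N' by move=> i; have /andP[? ?] := hf' i.
    by rewrite -[q]pi_val hq hs pi_sum.
  move=> s g us hg hsum.
  pose X i := epsilon (inhabits (0:M)) (fun x => x \in GM i /\ eqm x (val (g i))).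
  have hX : forall i, X i \in GM i /\ eqm (X i) (val (g i)).
    by move=> i; have /GQP hex := hg i; exact: (epsilon_spec _ _ hex).
  have hXN' : forall i, X i \in N'.
    by move=> i; apply: eqm_N' (proj2 (hX i)) (valN' _).
  have hgX : forall i, g i = pi (X i).
    move=> i; rewrite -[g i]pi_val; apply: piE => //; first exact: valN'.
    exact: eqm_sym (proj2 (hX i)).
  have hsN : \sum_(i <- s) X i \in N.
    apply: pi_eq0; first by apply: sg_sum.
    rewrite pi_sum // -[RHS]hsum; by apply: eq_bigr => i _; rewrite hgX.
  case: (HNgr _ hsN) => t [h [hhG hhN ht]].
  have [h' [hh' ht']] := collapse (G := fun i => [pred x | (x \in GM i) && (x \in N)]) t HGN
       (fun i => introT andP (conj (hhG i) (hhN i))).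
  move=> i iS.
  have := uniqueness HGM (conj Hex Huni) us (undup_uniq t) (fun i => proj1 (hX i))
    (fun i => proj1 (elimTF andP (hh' i))) (etrans ht ht') iS.
  move=> e; rewrite hgX; apply: pi_N; rewrite e; case: ifP => _; last by apply: sg0.
  by have /andP[] := hh' i.
split.
  move=> m n a q ha /GQP[x [h e]]; apply/GQP; exists (a *: x); split; first by apply: HGA.
  by apply: eqm_sym; apply: eqm_trans (vscaleQ _ _) (eqm_scale _ (eqm_sym e)).
split.
  move=> r x y; apply: Qeq.
  apply: (eqm_rw (eqm_trans (vdQ _) (eqm_delta (eqm_trans (vaddQ _ _) (eqm_add (vscaleQ _ _) (eqm_refl _)))))
    (eqm_trans (vaddQ _ _) (eqm_add (eqm_trans (vscaleQ _ _) (eqm_scale _ (vdQ _))) (vdQ _)))).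
  by rewrite Hlin.
split.
  move=> n q /GQP[x [h e]]; apply/GQP; exists (delta x); split; first by apply: Hdeg.
  by apply: eqm_sym; apply: eqm_trans (vdQ _) (eqm_delta (eqm_sym e)).
split.
  move=> q; apply: Qeq.
  apply: (eqm_rw (eqm_trans (vdQ _) (eqm_delta (vdQ _))) vzeroQ).
  by rewrite Hdd.
move=> m n a q ha /GQP[x [h e]]; apply: Qeq.
apply: (eqm_rw (eqm_trans (vdQ _) (eqm_delta (eqm_trans (vscaleQ _ _) (eqm_scale _ (eqm_sym e)))))
  (eqm_trans (vaddQ _ _) (eqm_add (eqm_trans (vscaleQ _ _) (eqm_scale _ (eqm_sym e)))
     (eqm_trans (vscaleQ _ _) (eqm_scale _ (eqm_trans (vdQ _) (eqm_delta (eqm_sym e)))))))).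
by rewrite (Hleib m n).
Qed.


Lemma Q_dg_simple (R : comPzRingType) (phi : {rmorphism R -> A}) GA d GM :
  dg_module phi GA d GM delta -> dg_submodule GM delta N -> dg_submodule GM delta N' ->
  dg_simple_subquotient GM delta N N' -> dg_simple (GQ GM) dQ.
Proof.
move=> HM HsN HsN' [[x0 [hx0 hnx0]] Hsimp].
have HQ := Q_dg_module HM HsN HsN'.
move: HQ => [HGQ [_ [HQdec _]]].
move: HM => [HGM [_ [Hdec _]]].
move: HsN' => [_ _ HN'gr _].
have HGN' : forall i, additive_subgroup [pred x | (x \in GM i) && (x \in N')].
  by move=> i; apply: sgI.
split.
  exists (pi x0); apply/eqP => h; by move: hnx0; rewrite (pi_eq0 hx0 h).
move=> L [HL HLs HLgr HLd].
have HGQL : forall i, additive_subgroup [pred q | (q \in GQ GM i) && (q \in L)].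
  by move=> i; apply: sgI.
pose L' := [pred x | (x \in N') && (pi x \in L)].
have HL' : dg_submodule GM delta L'.
  split.
  - split; first by rewrite inE sg0 // pi0 sg0.
    move=> x y; rewrite !inE => /andP[hx hxL] /andP[hy hyL].
    by rewrite sgB // piB // sgB.
  - move=> a x; rewrite !inE => /andP[hx hxL].
    by rewrite HN's // piZ // HLs.
  - move=> x; rewrite inE => /andP[hx hxL].
    case: (HN'gr _ hx) => s [f [hfG hfN' hxs]].
    have [f' [hf' hs]] := collapse (G := fun i => [pred x | (x \in GM i) && (x \in N')]) s HGN'
       (fun i => introT andP (conj (hfG i) (hfN' i))).
    case: (HLgr _ hxL) => t [g [hgG hgL hpt]].
    have [g' [hg' ht]] := collapse (G := fun i => [pred q | (q \in GQ GM i) && (q \in L)]) t HGQL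
       (fun i => introT andP (conj (hgG i) (hgL i))).
    have hf'N' : forall i, f' i \in N' by move=> i; have /andP[] := hf' i.
    have eq : \sum_(i <- undup s) pi (f' i) = \sum_(i <- undup t) g' i.
      by rewrite -pi_sum // -hs -hxs hpt ht.
    have hu := uniqueness HGQ HQdec (undup_uniq s) (undup_uniq t)
      (fun i => pi_GQ (proj1 (elimTF andP (hf' i))) (hf'N' i))
      (fun i => proj1 (elimTF andP (hg' i))) eq.
    exists (undup s), (fun i => if i \in undup s then f' i else 0); split.
    + move=> i; case: ifP => _; last exact: sg0.
      by have /andP[] := hf' i.
    + move=> i; case: ifP => hi; last by rewrite inE sg0 // pi0 sg0.
      rewrite inE hf'N' (hu i hi) /=; case: ifP => _; last exact: sg0.
      by have /andP[] := hg' i.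
    + by rewrite hxs hs; apply: eq_big_seq => i ->.
  - move=> x; rewrite !inE => /andP[hx hxL].
    by rewrite HN'd // pid // HLd.
case: (Hsimp L' HL').
- by move=> x hx; rewrite inE HNN' // pi_N // sg0.
- by move=> x; rewrite inE => /andP[].
- move=> H; left => q hq.
  have : val q \in L' by rewrite inE valN' pi_val.
  by move/H => /pi_N; rewrite pi_val.
- move=> H; right => q.
  by have := H (val q) (valN' q); rewrite inE pi_val => /andP[].
Qed.

Lemma step (R : comPzRingType) (phi : {rmorphism R -> A}) GA d GM :
  (forall (S : lmodType A) (GS : int -> pred S) (dS : S -> S),
      dg_module phi GA d GS dS -> dg_simple GS dS -> acyclic dS) ->
  dg_module phi GA d GM delta -> dg_submodule GM delta N -> dg_submodule GM delta N' ->
  dg_simple_subquotient GM delta N N' ->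
  forall x, x \in N' -> delta x = 0 -> exists y, y \in N' /\ x - delta y \in N.
Proof.
move=> hyp HM HsN HsN' Hsq x hx hdx.
have Hac := hyp _ _ _ (Q_dg_module HM HsN HsN') (Q_dg_simple HM HsN HsN' Hsq).
have : dQ (pi x) = 0 by rewrite -pid // hdx pi0.
case/Hac => q hq; exists (val q); split; first exact: valN'.
apply: pi_eq0; first by rewrite sgB // HN'd // valN'.
by rewrite piB ?HN'd ?valN' // pid ?valN' // pi_val -hq subrr.
Qed.

End Quot.

Unset Implicit Arguments.
Import GRing.Theory.
Local Open Scope ring_scope.

Lemma step' (R : comPzRingType) (A : pzRingType) (phi : {rmorphism R -> A})
    (GA : int -> pred A) (d : A -> A) (M : lmodType A) (GM : int -> pred M) (delta : M -> M) (N N' : pred M) :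
  (forall (S : lmodType A) (GS : int -> pred S) (dS : S -> S),
      dg_module phi GA d GS dS -> dg_simple GS dS -> acyclic dS) ->
  dg_module phi GA d GM delta -> dg_submodule GM delta N -> dg_submodule GM delta N' ->
  (forall x, x \in N -> x \in N') ->
  dg_simple_subquotient GM delta N N' ->
  forall x, x \in N' -> delta x = 0 -> exists y, y \in N' /\ x - delta y \in N.
Proof.
move=> hyp HM HsN HsN' Hinc.
have Hdadd : forall x y, delta (x + y) = delta x + delta y.
  by move=> x y; have := (proj1 (proj2 (proj2 (proj2 (proj2 HM))))) 1 x y; rewrite rmorph1 !scale1r.
have HsN0 := HsN; have HsN'0 := HsN'.
move: HsN HsN' => [HN HNs _ HNd] [HN' HN's _ HN'd].
exact: (step HN HN' HNs HN's HNd HN'd Hinc Hdadd hyp HM HsN0 HsN'0).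
Qed.

Theorem theorem3p9 (R : comPzRingType) (A : pzRingType) (phi : {rmorphism R -> A})
    (GA : int -> pred A) (d : A -> A) :
  dg_algebra phi GA d ->
  (forall (S : lmodType A) (GS : int -> pred S) (dS : S -> S),
      dg_module phi GA d GS dS -> dg_simple GS dS -> acyclic dS) ->
  (forall (M : lmodType A) (GM : int -> pred M) (dM : M -> M),
      dg_module phi GA d GM dM ->
      (exists n, dg_comp_length GM dM n) -> acyclic dM) /\
  ((exists n, dg_comp_length (M := A^o) GA d n) -> acyclic d).
Proof.
move=> Halg hyp.
have part1 : forall (M : lmodType A) (GM : int -> pred M) (dM : M -> M),
      dg_module phi GA d GM dM ->
      (exists n, dg_comp_length GM dM n) -> acyclic dM.
  move=> M GM dM HM [n [Ms [HMs H0 Hn Hinc Hsq]]].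
  have Hdadd : forall x y, dM (x + y) = dM x + dM y.
    by move=> x y; have := (proj1 (proj2 (proj2 (proj2 (proj2 HM))))) 1 x y; rewrite rmorph1 !scale1r.
  have d0 : dM 0 = 0.
    by have := Hdadd 0 0; rewrite addr0 => /(congr1 (fun z => z - dM 0)); rewrite subrr addrK.
  have dN : forall x, dM (- x) = - dM x.
    by move=> x; apply/eqP; rewrite -subr_eq0 opprK -Hdadd addNr d0.
  have Hdd : forall x, dM (dM x) = 0 by move: HM => [_ [_ [_ [_ [_ [_ [H _]]]]]]].
  have claim : forall i, (i <= n)%N -> forall x, x \in Ms i -> dM x = 0 -> exists y, y \in Ms i /\ x = dM y.
    elim=> [|i IH] hi x hx hdx.
      exists 0; split; last by rewrite d0 (H0 _ hx).
      by case: (HMs 0%N hi) => [[? _] _ _ _].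
    have hi' : (0 < i.+1 <= n)%N by [].
    have [y [hy hxy]] := @step' R A phi GA d M GM dM (Ms i) (Ms i.+1) hyp HM (HMs i (ltnW hi)) (HMs i.+1 hi) (Hinc _ hi') (Hsq _ hi') x hx hdx.
    have hd2 : dM (x - dM y) = 0 by rewrite Hdadd dN Hdd hdx subrr.
    have [z [hz hxz]] := IH (ltnW hi) _ hxy hd2.
    exists (y + z); split.
      case: (HMs i.+1 hi) => [HS _ _ _]; apply: sgD => //; exact: (Hinc _ hi').
    by rewrite Hdadd -hxz addrC subrK.
  move=> x hdx; have [y [_ ->]] := claim n (leqnn n) x (Hn x) hdx; by exists y.
split => //.
move=> Hc; apply: (part1 (A^o) GA d) Hc.
move: Halg => [_ [HGA [HGAphi [Hdec [H1 [HGAM [Hlin [Hdeg [Hdd Hleib]]]]]]]]].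
split => //; split => //; split => //; split => //; split => //; split => //; split => //.
move=> m n a x ha hx /=; rewrite (Hleib n m) //.
Qed.
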